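(* Let $A$ be a distributive meet-complemented lattice in which $\Box x$, $\Diamond x$ exist for every $x\in A$ and in which the relative meet-complement $a\to b=\max\{c\in A: a\wedge c\le b\}$ exists for all $a,b\in A$. Then for all $a,b\in A$: (1) $\Box(a\to b)\le\Box a\to\Box b$; (2) $\Box(a\to b)\le\Diamond a\to\Diamond b$; (3) $\Diamond a\to\Box b\le\Box(a\to b)$.
   Context: A meet-complemented lattice is a lattice $(L,\le)$ such that for every $a\in L$ the element $\neg a=\max\{b\in L: a\wedge b\le c\ \text{for all } c\in L\}$ exists; it is bounded with bottom $0$ and top $1$. For $a\in L$, $\Box a=\max\{b\in L: a\vee\neg b=1\}$ and $\Diamond a=\min\{b\in L: \neg a\vee b=1\}$. *)

(* Defs.v *)
From mathcomp Require Import all_boot all_order.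
Set Implicit Arguments. Unset Strict Implicit. Unset Printing Implicit Defensive.
Import Order.TTheory.
Local Open Scope order_scope.

Section Defs.
Context {disp : Order.disp_t} {T : tbDistrLatticeType disp}.

Definition is_greatest (P : T -> Prop) (m : T) : Prop :=
  P m /\ forall x, P x -> x <= m.
Definition is_least (P : T -> Prop) (m : T) : Prop :=
  P m /\ forall x, P x -> m <= x.

Definition is_meet_compl (neg : T -> T) : Prop :=
  forall a, is_greatest (fun b => forall c, a `&` b <= c) (neg a).

Definition is_box (neg box : T -> T) : Prop :=
  forall a, is_greatest (fun b => a `|` neg b = \top) (box a).

Definition is_dia (neg dia : T -> T) : Prop :=
  forall a, is_least (fun b => neg a `|` b = \top) (dia a).

Definition is_rel_meet_compl (imp : T -> T -> T) : Prop :=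
  forall a b, is_greatest (fun c => a `&` c <= b) (imp a b).
End Defs.

(* Main.v *)
Require Import Defs.
From mathcomp Require Import all_boot all_order.
Import Order.TTheory.
Local Open Scope order_scope.

Section H.
Context {disp : Order.disp_t} {A : tbDistrLatticeType disp}
  {neg box dia : A -> A} {imp : A -> A -> A}.
Hypotheses (Hn : is_meet_compl neg) (Hb : is_box neg box) (Hd : is_dia neg dia)
  (Hi : is_rel_meet_compl imp).

Lemma negP (a : A) : a `&` neg a = \bot.
Proof. apply/le_anti; rewrite le0x andbT; exact: (proj1 (Hn a)). Qed.
Lemma neg_max (a x : A) : a `&` x = \bot -> x <= neg a.
Proof. move=> h; apply: (proj2 (Hn a)) => c; rewrite h; exact: le0x. Qed.
Lemma impP (a b : A) : a `&` imp a b <= b. Proof. exact: (proj1 (Hi a b)). Qed.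
Lemma imp_max (a b c : A) : a `&` c <= b -> c <= imp a b.
Proof. exact: (proj2 (Hi a b)). Qed.

Lemma cover (p q x y : A) : p `|` q = \top -> x `&` p <= y -> x `&` q <= y -> x <= y.
Proof.
move=> hpq h1 h2; have -> : x = x `&` (p `|` q) by rewrite hpq meetx1.
by rewrite meetUr leUx h1 h2.
Qed.
Lemma topP (z p q : A) : p `|` q = \top -> p <= z -> q <= z -> z = \top.
Proof.
move=> hpq h1 h2; apply/le_anti; rewrite lex1 /=.
by apply: (@cover p q \top z hpq); rewrite meet1x.
Qed.

Arguments cover {p q x y}. Arguments topP {z p q}.
Lemma neg_anti (x y : A) : x <= y -> neg y <= neg x.
Proof.
move=> h; apply: neg_max; apply/le_anti; rewrite le0x andbT -(negP y).
by apply: leI2.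
Qed.

Lemma box_top (a : A) : a `|` neg (box a) = \top. Proof. exact: (proj1 (Hb a)). Qed.
Lemma box_max (a x : A) : a `|` neg x = \top -> x <= box a. Proof. exact: (proj2 (Hb a)). Qed.
Lemma dia_top (a : A) : neg a `|` dia a = \top. Proof. exact: (proj1 (Hd a)). Qed.
Lemma dia_min (a x : A) : neg a `|` x = \top -> dia a <= x. Proof. exact: (proj2 (Hd a)). Qed.

Lemma box_mono (a a' : A) : a <= a' -> box a <= box a'.
Proof.
move=> h; apply: box_max; apply: (topP (box_top a)).
  exact: lexUl. exact: lexUr.
Qed.

Lemma box_meet (x y : A) : box x `&` box y <= box (x `&` y).
Proof.
apply: box_max; apply: (topP (box_top x)).
  apply: (cover (box_top y)).
    exact: lexUl.
  apply: lexUr; rewrite meetC; apply: leIxl; apply: neg_anti; exact: leIr.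
apply: lexUr; apply: neg_anti; exact: leIl.
Qed.

Lemma bot_le (x y c : A) : x <= y `|` neg c -> c `&` x <= y.
Proof.
move=> h; apply: (@le_trans _ _ (c `&` (y `|` neg c))); first by apply: leI2.
by rewrite meetUr negP joinx0 leIr.
Qed.

End H.
Arguments cover {disp A p q x y}. Arguments topP {disp A z p q}.

Theorem proposition27 (disp : Order.disp_t) (A : tbDistrLatticeType disp)
  (neg box dia : A -> A) (imp : A -> A -> A) :
  is_meet_compl neg -> is_box neg box -> is_dia neg dia ->
  is_rel_meet_compl imp ->
  forall a b : A,
    [/\ box (imp a b) <= imp (box a) (box b),
        box (imp a b) <= imp (dia a) (dia b) &
        imp (dia a) (box b) <= box (imp a b)].
Proof.
move=> Hn Hb Hd Hi a b; split.
- apply: imp_max => //.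
  apply: le_trans; first exact: (box_meet Hn Hb a (imp a b)).
  apply: box_mono => //; exact: impP.
- apply: imp_max => //; rewrite meetC; apply: bot_le => //.
  apply: dia_min => //.
  apply: (topP (box_top Hb (imp a b))).
    apply: (cover (dia_top Hd b)).
      apply: lexUl; apply: neg_max => //.
      apply/le_anti; rewrite le0x andbT -(negP Hn b).
      rewrite meetA; apply: leI2 => //; exact: impP.
    apply: leIxr; apply: lexUr; exact: lexUl.
  by apply: lexUr; apply: lexUr.
- apply: box_max => //.
  apply: (topP (dia_top Hd a)).
    apply: lexUl; apply: imp_max => //; rewrite negP //; exact: le0x.
  apply: (cover (box_top Hb b)).
    apply: lexUl; apply: imp_max => //; apply: leIxr; exact: leIr.
  apply: lexUr; apply: neg_max => //.
  apply/le_anti; rewrite le0x andbT -(negP Hn (box b)).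
  rewrite meetA; apply: leI2 => //; rewrite meetC; exact: impP.
Qed.
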